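(* Let $S=G\times E$ be a right group with $G$ an infinite group and $E$ a right zero semigroup, and let $T$ be a subsemigroup of $S$ of finite Green index. Then $T=H\times E$ for some subgroup $H$ of finite index in $G$; in particular $T$ is a right group.
   Context: A right zero semigroup is a semigroup $E$ with $ef=f$ for all $e,f\in E$; a right group is a direct product $G\times E$ of a group and a right zero semigroup, with componentwise multiplication $(g,e)(h,f)=(gh,f)$. For a subsemigroup $T$ of a semigroup $S$, the relative Green's relations on $S$ are: $u\,\mathcal{R}^T v$ iff $uT^1=vT^1$, $u\,\mathcal{L}^T v$ iff $T^1u=T^1v$, and $\mathcal{H}^T=\mathcal{R}^T\cap\mathcal{L}^T$, where $T^1=T\cup\{1\}$. The Green index of $T$ in $S$ is one plus the number of $\mathcal{H}^T$-classes contained in $S\setminus T$. *)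

(* Defs.v *)
From Stdlib Require Import List.

Set Implicit Arguments.

Definition is_group (G : Type) (mul : G -> G -> G) (one : G) (inv : G -> G) : Prop :=
  (forall x y z, mul (mul x y) z = mul x (mul y z)) /\
  (forall x, mul one x = x) /\ (forall x, mul x one = x) /\
  (forall x, mul (inv x) x = one) /\ (forall x, mul x (inv x) = one).

Definition infinite_type (X : Type) : Prop :=
  forall l : list X, exists x, ~ In x l.

Definition is_right_zero_semigroup (E : Type) (op : E -> E -> E) : Prop :=
  forall e f, op e f = f.

Definition rg_mul (G E : Type) (mul : G -> G -> G) (op : E -> E -> E)
  (u v : G * E) : G * E := (mul (fst u) (fst v), op (snd u) (snd v)).

Definition is_subsemigroup (S : Type) (m : S -> S -> S) (T : S -> Prop) : Prop :=
  forall x y, T x -> T y -> T (m x y).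

(* Membership in u T^1 = {u} ∪ uT, and in T^1 u. *)
Definition in_rideal1 (S : Type) (m : S -> S -> S) (T : S -> Prop) (u x : S) : Prop :=
  x = u \/ exists t, T t /\ x = m u t.
Definition in_lideal1 (S : Type) (m : S -> S -> S) (T : S -> Prop) (u x : S) : Prop :=
  x = u \/ exists t, T t /\ x = m t u.

Definition relR (S : Type) (m : S -> S -> S) (T : S -> Prop) (u v : S) : Prop :=
  forall x, in_rideal1 m T u x <-> in_rideal1 m T v x.
Definition relL (S : Type) (m : S -> S -> S) (T : S -> Prop) (u v : S) : Prop :=
  forall x, in_lideal1 m T u x <-> in_lideal1 m T v x.
Definition relH (S : Type) (m : S -> S -> S) (T : S -> Prop) (u v : S) : Prop :=
  relR m T u v /\ relL m T u v.

Definition finite_green_index (S : Type) (m : S -> S -> S) (T : S -> Prop) : Prop :=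
  exists l : list S,
    (forall r, In r l -> ~ T r) /\
    (forall u, ~ T u -> exists r, In r l /\ relH m T u r).

Definition is_subgroup (G : Type) (mul : G -> G -> G) (one : G) (inv : G -> G)
  (H : G -> Prop) : Prop :=
  H one /\ (forall x y, H x -> H y -> H (mul x y)) /\ (forall x, H x -> H (inv x)).

Definition finite_index (G : Type) (mul : G -> G -> G) (H : G -> Prop) : Prop :=
  exists l : list G, forall x, exists g h, In g l /\ H h /\ x = mul g h.

(* Main.v *)
Require Import Defs.
From Stdlib Require Import List Classical Lia.
Set Implicit Arguments.

Fixpoint pw (G : Type) (mul : G -> G -> G) (one : G) (a : G) (n : nat) : G :=
  match n with 0 => one | S n => mul a (pw mul one a n) end.

Lemma inv_unique_r (G : Type) (mul : G -> G -> G) (one : G) (inv : G -> G)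
  (hG : is_group mul one inv) a b : mul a b = one -> b = inv a.
Proof.
  destruct hG as (As & L1 & R1 & LV & RV). intros H.
  rewrite <- (L1 b), <- (LV a), As, H, R1. reflexivity.
Qed.

Lemma inv_mul (G : Type) (mul : G -> G -> G) (one : G) (inv : G -> G)
  (hG : is_group mul one inv) a b : inv (mul a b) = mul (inv b) (inv a).
Proof.
  symmetry. apply (inv_unique_r hG).
  destruct hG as (As & L1 & R1 & LV & RV).
  rewrite As, <- (As b), RV, L1, RV. reflexivity.
Qed.

Lemma inv_inv (G : Type) (mul : G -> G -> G) (one : G) (inv : G -> G)
  (hG : is_group mul one inv) a : inv (inv a) = a.
Proof.
  symmetry. apply (inv_unique_r hG). destruct hG as (As & L1 & R1 & LV & RV). apply LV.
Qed.

Lemma pw_S_r (G : Type) (mul : G -> G -> G) (one : G) (inv : G -> G)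
  (hG : is_group mul one inv) a n : pw mul one a (S n) = mul (pw mul one a n) a.
Proof.
  destruct hG as (As & L1 & R1 & LV & RV).
  induction n as [|n IH]; simpl in *. rewrite L1, R1; reflexivity.
  rewrite As. f_equal. exact IH.
Qed.

Lemma pw_add (G : Type) (mul : G -> G -> G) (one : G) (inv : G -> G)
  (hG : is_group mul one inv) a n k :
  pw mul one a (n + k) = mul (pw mul one a n) (pw mul one a k).
Proof.
  destruct hG as (As & L1 & R1 & LV & RV).
  induction n as [|n IH]; simpl. rewrite L1; reflexivity.
  rewrite IH, As. reflexivity.
Qed.

Lemma pw_inv (G : Type) (mul : G -> G -> G) (one : G) (inv : G -> G)
  (hG : is_group mul one inv) x k :
  mul (pw mul one x k) (pw mul one (inv x) k) = one.
Proof.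
  induction k as [|k IH].
  - simpl. destruct hG as (As & L1 & R1 & LV & RV). apply L1.
  - rewrite (pw_S_r hG (inv x)). simpl.
    destruct hG as (As & L1 & R1 & LV & RV).
    rewrite As, <- (As (pw mul one x k)), IH, L1, RV. reflexivity.
Qed.

Lemma pw_P (G : Type) (mul : G -> G -> G) (one : G) (inv : G -> G)
  (hG : is_group mul one inv) (P : G -> Prop)
  (hP : forall a b, P a -> P b -> P (mul a b)) x (Hx : P x) k :
  P (pw mul one x (S k)).
Proof.
  induction k as [|k IH].
  - simpl. destruct hG as (As & L1 & R1 & LV & RV). rewrite R1. exact Hx.
  - simpl. apply hP; assumption.
Qed.

Definition box (G : Type) (mul : G -> G -> G) (inv : G -> G) (P : G -> Prop) (r x : G) :=
  x = r \/ exists a, P a /\ P (inv a) /\ x = mul r a.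

Lemma box_rel (G : Type) (mul : G -> G -> G) (one : G) (inv : G -> G)
  (hG : is_group mul one inv) (P : G -> Prop)
  (hP : forall a b, P a -> P b -> P (mul a b)) r y w :
  box mul inv P r y -> box mul inv P r w -> mul (inv y) w = one \/ P (mul (inv y) w).
Proof.
  intros [Hy|[a [Ha [Ha' Hy]]]] [Hw|[b [Hb [Hb' Hw]]]]; subst.
  - left. destruct hG as (As & L1 & R1 & LV & RV). apply LV.
  - right. destruct hG as (As & L1 & R1 & LV & RV) eqn:E. rewrite <- As, LV, L1. exact Hb.
  - right. rewrite (inv_mul hG). destruct hG as (As & L1 & R1 & LV & RV).
    rewrite As, LV, R1. exact Ha'.
  - right. rewrite (inv_mul hG). destruct hG as (As & L1 & R1 & LV & RV).
    rewrite As, <- (As (inv r)), LV, L1. apply hP; assumption.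
Qed.

Lemma boxes (A : Type) (d : A) (rs : list A) (B : A -> nat -> Prop) :
  (forall i, exists r, In r rs /\ B r i) -> forall N, exists bs, length bs = N /\
  forall i, i < N -> In (nth i bs d) rs /\ B (nth i bs d) i.
Proof.
  intros H N. induction N as [|N [bs [Hl Hb]]].
  - exists nil. split; [reflexivity| intros; lia].
  - destruct (H N) as [r [Hr HB]]. exists (bs ++ r :: nil). split.
    + rewrite length_app; simpl; lia.
    + intros i Hi. destruct (PeanoNat.Nat.lt_ge_cases i N).
      * rewrite app_nth1 by lia. auto.
      * assert (i = N) by lia. subst i. rewrite app_nth2 by lia.
        rewrite Hl, PeanoNat.Nat.sub_diag. simpl. auto.
Qed.

Lemma zpow_P (G : Type) (mul : G -> G -> G) (one : G) (inv : G -> G)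
  (hG : is_group mul one inv) (P : G -> Prop)
  (hP : forall a b, P a -> P b -> P (mul a b)) x (Hx : P x) k :
  P (pw mul one (inv x) (S k)) -> P (inv x).
Proof.
  intros H. destruct k as [|k].
  - simpl in H. destruct hG as (As & L1 & R1 & LV & RV). rewrite R1 in H. exact H.
  - assert (E : mul (pw mul one x (S k)) (pw mul one (inv x) (S (S k))) = inv x).
    { rewrite (pw_S_r hG (inv x) (S k)).
      pose proof (pw_inv hG x (S k)) as E.
      destruct hG as (As & L1 & R1 & LV & RV).
      rewrite <- As, E, L1. reflexivity. }
    rewrite <- E. apply hP; [apply (pw_P hG); assumption | exact H].
Qed.

Lemma zpow_one (G : Type) (mul : G -> G -> G) (one : G) (inv : G -> G)
  (hG : is_group mul one inv) (P : G -> Prop)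
  (hP : forall a b, P a -> P b -> P (mul a b)) x (Hx : P x) k :
  pw mul one (inv x) (S k) = one -> P (inv x).
Proof.
  intros H.
  assert (E1 : pw mul one x (S k) = one).
  { pose proof (pw_inv hG x (S k)) as E. rewrite H in E.
    destruct hG as (As & L1 & R1 & LV & RV). rewrite R1 in E. exact E. }
  rewrite (pw_S_r hG) in E1.
  assert (E2 : pw mul one x k = inv x).
  { pose proof (inv_unique_r hG _ _ E1) as E3.
    rewrite <- (inv_inv hG (pw mul one x k)), <- E3. reflexivity. }
  destruct k as [|k].
  - simpl in E2.
    assert (Ex : x = one).
    { destruct hG as (As & L1 & R1 & LV & RV) eqn:EG.
      transitivity (mul x (inv x)); [rewrite <- E2, R1; reflexivity | apply RV]. }
    rewrite <- E2, <- Ex. exact Hx.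
  - rewrite <- E2. apply (pw_P hG); assumption.
Qed.

Lemma cancel_l (G : Type) (mul : G -> G -> G) (one : G) (inv : G -> G)
  (hG : is_group mul one inv) a b : mul (inv a) (mul a b) = b.
Proof. destruct hG as (As & L1 & R1 & LV & RV). rewrite <- As, LV, L1. reflexivity. Qed.

Lemma inv_closed (G : Type) (mul : G -> G -> G) (one : G) (inv : G -> G)
  (hG : is_group mul one inv) (P : G -> Prop)
  (hP : forall a b, P a -> P b -> P (mul a b)) (rs : list G)
  (hcov : forall x, ~ P x -> exists r, In r rs /\ box mul inv P r x) x :
  P x -> P (inv x).
Proof.
  intros Hx. apply NNPP; intro Hz.
  assert (Hf : forall i, ~ P (pw mul one (inv x) (S i))).
  { intros i Hp. apply Hz. eapply zpow_P; eauto. }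
  destruct (boxes one rs (fun r i => box mul inv P r (pw mul one (inv x) (S i)))
              (fun i => hcov _ (Hf i)) (S (length rs))) as [bs [Hl Hb]].
  assert (Hnd : ~ NoDup bs).
  { intro Hnd. apply NoDup_incl_length with (l' := rs) in Hnd. lia.
    intros y Hy. destruct (In_nth bs y one Hy) as [n [Hn Hn']]. subst y. apply Hb. lia. }
  assert (Hlt : forall i j, i < j < S (length rs) -> nth i bs one = nth j bs one -> False).
  { intros i j [Hij Hj] Heq.
    destruct (Hb i ltac:(lia)) as [_ Bi]. destruct (Hb j Hj) as [_ Bj].
    rewrite Heq in Bi.
    destruct (box_rel hG hP Bi Bj) as [E|E];
    replace (S j) with (S i + S (j - i - 1)) in E by lia;
    rewrite (pw_add hG), (cancel_l hG) in E.
    - apply Hz. eapply zpow_one; eauto.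
    - apply Hz. eapply zpow_P; eauto. }
  apply Hnd, (NoDup_nth bs one). intros i j Hi Hj Hij.
  destruct (PeanoNat.Nat.lt_total i j) as [H|[H|H]]; auto.
  - exfalso. apply (Hlt i j); [lia | exact Hij].
  - exfalso. apply (Hlt j i); [lia | symmetry; exact Hij].
Qed.

Lemma key (G : Type) (mul : G -> G -> G) (one : G) (inv : G -> G)
  (hG : is_group mul one inv) (hinf : infinite_type G) (P : G -> Prop)
  (hP : forall a b, P a -> P b -> P (mul a b)) (rs : list G)
  (hcov : forall x, ~ P x -> exists r, In r rs /\ box mul inv P r x) :
  is_subgroup mul one inv P /\ finite_index mul P.
Proof.
  assert (Hne : exists x, P x).
  { destruct (hinf rs) as [x Hx].
    destruct (classic (P x)) as [H|H]; [eauto|].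
    destruct (hcov x H) as [r [Hr [E|[a [Ha _]]]]]; [subst; contradiction | eauto]. }
  destruct Hne as [x0 Hx0].
  pose proof (@inv_closed G mul one inv hG P hP rs hcov) as Hinv.
  pose proof hG as hG'.
  destruct hG' as (As & L1 & R1 & LV & RV).
  assert (H1 : P one) by (rewrite <- (RV x0); apply hP; auto).
  split.
  - split; [exact H1 | split; auto].
  - exists (one :: rs). intro x. destruct (classic (P x)) as [H|H].
    + exists one, x. split; [left; reflexivity | split; auto].
    + destruct (hcov x H) as [r [Hr [E|[a [Ha [_ E]]]]]].
      * exists r, one. split; [right; auto | split; auto]. rewrite R1; auto.
      * exists r, a. split; [right; auto | split; auto].
Qed.

Lemma As_ (G : Type) (mul : G -> G -> G) (one : G) (inv : G -> G)
  (hG : is_group mul one inv) a b c : mul (mul a b) c = mul a (mul b c).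
Proof. apply hG. Qed.

Theorem mainTheorem15
  (G : Type) (mul : G -> G -> G) (one : G) (inv : G -> G)
  (E : Type) (op : E -> E -> E)
  (hG : is_group mul one inv) (hGinf : infinite_type G)
  (hE : is_right_zero_semigroup op)
  (T : G * E -> Prop)
  (hT : is_subsemigroup (rg_mul mul op) T)
  (hidx : finite_green_index (rg_mul mul op) T) :
  exists H : G -> Prop,
    is_subgroup mul one inv H /\ finite_index mul H /\
    (forall g e, T (g, e) <-> H g).
Proof.
  assert (Hkey : forall e, is_subgroup mul one inv (fun g => T (g, e)) /\
                           finite_index mul (fun g => T (g, e))).
  { intro e. destruct hidx as [l [Hl Hcov]].
    refine (@key G mul one inv hG hGinf (fun g => T (g, e)) _ (map fst l) _).
    - intros a b Ha Hb. pose proof (hT _ _ Ha Hb) as H.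
      unfold rg_mul in H; simpl in H. rewrite hE in H. exact H.
    - intros x Hx. destruct (Hcov (x, e) Hx) as [r [Hr [HR HL]]].
      exists (fst r). split; [apply in_map; exact Hr|].
      destruct (classic ((x, e) = r)) as [Heq|Hne].
      + left. subst r. reflexivity.
      + right.
        destruct (proj2 (HL r) (or_introl eq_refl)) as [Hr1|[s [Hs Hr1]]];
          [congruence|].
        destruct (proj2 (HR r) (or_introl eq_refl)) as [Hr2|[t [Ht Hr2]]];
          [congruence|].
        destruct (proj1 (HR (x, e)) (or_introl eq_refl)) as [Hr3|[t' [Ht' Hr3]]];
          [congruence|].
        destruct r as [rg re]. destruct t as [tg te]. destruct t' as [tg' te'].
        unfold rg_mul in *; simpl in *.
        injection Hr1 as _ Hre. rewrite hE in Hre.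
        injection Hr2 as Hrg Hte. rewrite hE in Hte.
        injection Hr3 as Hxg Hte'. rewrite hE in Hte'.
        subst re te te'.
        exists tg'. split; [exact Ht'|split; [|exact Hxg]].
        assert (Einv : tg = inv tg').
        { apply (inv_unique_r hG).
          apply (f_equal (mul (inv rg))) in Hrg.
          rewrite Hxg, (As_ hG), (cancel_l hG) in Hrg. pose proof hG as (As & L1 & R1 & LV & RV). rewrite LV in Hrg. symmetry; exact Hrg. }
        rewrite <- Einv. exact Ht. }
  destruct (classic (exists e : E, True)) as [[e0 _]|Hno].
  - exists (fun g => T (g, e0)). destruct (Hkey e0) as [Hs Hf].
    split; [exact Hs | split; [exact Hf|]].
    assert (Hmove : forall e f g, T (g, e) -> T (g, f)).
    { intros e f g Hg. destruct (Hkey f) as [[H1 _] _].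
      pose proof (hT _ _ Hg H1) as H. unfold rg_mul in H; simpl in H.
      rewrite hE in H. destruct hG as (As & L1 & R1 & LV & RV).
      rewrite R1 in H. exact H. }
    intros g e. split; apply Hmove.
  - exists (fun _ => True). split; [|split].
    + split; [exact I | split; auto].
    + exists (one :: nil). intro x. exists one, x. split; [left; reflexivity|split; [exact I|]].
      destruct hG as (As & L1 & R1 & LV & RV). rewrite L1; reflexivity.
    + intros g e. exfalso. apply Hno. exists e. exact I.
Qed.
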